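(* Let $\ell:K(H\times\mathrm{Id})\to HM$ be an abstract GSOS rule with $\ell$-interpretation $b:KC\to C$. Then every sandwiched $\ell$-equation $e:X\to MHMX$ has a unique solution in $C$, i.e. there is a unique morphism $e^\dagger:X\to C$ such that $$e^\dagger = b^\sharp\cdot Mc^{-1}\cdot MHb^\sharp\cdot MHMe^\dagger\cdot e.$$
   Context: Let $\mathcal A$ be a category with binary products and coproducts, let $H:\mathcal A\to\mathcal A$ be a functor with a terminal coalgebra $c:C\to HC$ (so $c$ is an isomorphism by Lambek's lemma), and let $K:\mathcal A\to\mathcal A$ be a functor such that every object $X$ has a free $K$-algebra $\varphi_X:KMX\to MX$ with universal morphism $\eta_X:X\to MX$. Then $(M,\eta,\mu)$ is the free monad on $K$, where $\mu_X:MMX\to MX$ is the unique $K$-algebra homomorphism $(MMX,\varphi_{MX})\to(MX,\varphi_X)$ with $\mu_X\cdot\eta_{MX}=\mathrm{id}_{MX}$, and $\kappa=\varphi\cdot K\eta:K\to M$. For a $K$-algebra $a:KA\to A$ let $a^\sharp:MA\to A$ be the unique $K$-algebra homomorphism with $a^\sharp\cdot\eta_A=\mathrm{id}_A$; it is an Eilenberg–Moore algebra for $M$ and $a=a^\sharp\cdot\kappa_A$. An abstract GSOS rule is a natural transformation $\ell:K(H\times\mathrm{Id})\to HM$; its $\ell$-interpretation is the unique morphism $b:KC\to C$ with $c\cdot b=Hb^\sharp\cdot\ell_C\cdot K\langle c,\mathrm{id}_C\rangle$ (it exists and is unique). A sandwiched $\ell$-equation is any morphism $e:X\to MHMX$.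 *)

(* Defs.v *)
(* Universal properties are presented
   algebraically: the mediating morphisms are given as operations together
   with their defining equations and uniqueness laws (equivalent, under
   choice, to "there exists a unique ..."). *)
Set Implicit Arguments.
Unset Strict Implicit.

Record Category := {
  Obj :> Type;
  Hom : Obj -> Obj -> Type;
  idm : forall A, Hom A A;
  comp : forall A B C, Hom B C -> Hom A B -> Hom A C;
  comp_id_l : forall A B (f : Hom A B), comp (idm B) f = f;
  comp_id_r : forall A B (f : Hom A B), comp f (idm A) = f;
  comp_assoc : forall A B C D (h : Hom C D) (g : Hom B C) (f : Hom A B),
      comp h (comp g f) = comp (comp h g) f
}.

Arguments Hom : clear implicits.
Arguments idm {c} A.
Arguments comp {c A B C} _ _.
Infix "∘" := comp (at level 40, left associativity).

Record Functor (Cat : Category) := {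
  fobj :> Obj Cat -> Obj Cat;
  fmap : forall A B, Hom Cat A B -> Hom Cat (fobj A) (fobj B);
  fmap_id : forall A, fmap (idm A) = idm (fobj A);
  fmap_comp : forall A B C (g : Hom Cat B C) (f : Hom Cat A B),
      fmap (g ∘ f) = fmap g ∘ fmap f
}.
Arguments fmap {Cat} f0 {A B} _.

Record Products (Cat : Category) := {
  prodo : Obj Cat -> Obj Cat -> Obj Cat;
  pi1 : forall A B, Hom Cat (prodo A B) A;
  pi2 : forall A B, Hom Cat (prodo A B) B;
  pairing : forall X A B, Hom Cat X A -> Hom Cat X B -> Hom Cat X (prodo A B);
  pi1_pairing : forall X A B (f : Hom Cat X A) (g : Hom Cat X B),
      pi1 A B ∘ pairing f g = f;
  pi2_pairing : forall X A B (f : Hom Cat X A) (g : Hom Cat X B),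
      pi2 A B ∘ pairing f g = g;
  pairing_unique : forall X A B (f : Hom Cat X A) (g : Hom Cat X B)
      (h : Hom Cat X (prodo A B)),
      pi1 A B ∘ h = f -> pi2 A B ∘ h = g -> h = pairing f g
}.
Arguments prodo {Cat} p _ _.
Arguments pi1 {Cat} p {A B}.
Arguments pi2 {Cat} p {A B}.
Arguments pairing {Cat} p {X A B} _ _.

Record Coproducts (Cat : Category) := {
  coprodo : Obj Cat -> Obj Cat -> Obj Cat;
  inl_ : forall A B, Hom Cat A (coprodo A B);
  inr_ : forall A B, Hom Cat B (coprodo A B);
  copairing : forall X A B, Hom Cat A X -> Hom Cat B X -> Hom Cat (coprodo A B) X;
  copairing_inl : forall X A B (f : Hom Cat A X) (g : Hom Cat B X),
      copairing f g ∘ inl_ A B = f;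
  copairing_inr : forall X A B (f : Hom Cat A X) (g : Hom Cat B X),
      copairing f g ∘ inr_ A B = g;
  copairing_unique : forall X A B (f : Hom Cat A X) (g : Hom Cat B X)
      (h : Hom Cat (coprodo A B) X),
      h ∘ inl_ A B = f -> h ∘ inr_ A B = g -> h = copairing f g
}.

Record TerminalCoalgebra (Cat : Category) (H : Functor Cat) := {
  tc_carrier : Obj Cat;
  tc_str : Hom Cat tc_carrier (H tc_carrier);
  tc_unfold : forall A, Hom Cat A (H A) -> Hom Cat A tc_carrier;
  tc_unfold_hom : forall A (a : Hom Cat A (H A)),
      tc_str ∘ tc_unfold a = fmap H (tc_unfold a) ∘ a;
  tc_unfold_unique : forall A (a : Hom Cat A (H A)) (h : Hom Cat A tc_carrier),
      tc_str ∘ h = fmap H h ∘ a -> h = tc_unfold a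
}.
Arguments tc_carrier {Cat H} t.
Arguments tc_str {Cat H} t.

Record FreeAlgebras (Cat : Category) (K : Functor Cat) := {
  Mo : Obj Cat -> Obj Cat;
  phi : forall X, Hom Cat (K (Mo X)) (Mo X);
  eta : forall X, Hom Cat X (Mo X);
  fext : forall X A, Hom Cat (K A) A -> Hom Cat X A -> Hom Cat (Mo X) A;
  fext_eta : forall X A (a : Hom Cat (K A) A) (f : Hom Cat X A),
      fext a f ∘ eta X = f;
  fext_hom : forall X A (a : Hom Cat (K A) A) (f : Hom Cat X A),
      fext a f ∘ phi X = a ∘ fmap K (fext a f);
  fext_unique : forall X A (a : Hom Cat (K A) A) (f : Hom Cat X A)
      (h : Hom Cat (Mo X) A),
      h ∘ eta X = f -> h ∘ phi X = a ∘ fmap K h -> h = fext a f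
}.
Arguments Mo {Cat K} f0 _.
Arguments phi {Cat K} f0 X.
Arguments eta {Cat K} f0 X.
Arguments fext {Cat K} f0 {X A} _ _.

Definition Mmap (Cat : Category) (K : Functor Cat) (F : FreeAlgebras K)
  (X Y : Obj Cat) (f : Hom Cat X Y) : Hom Cat (Mo F X) (Mo F Y) :=
  fext F (phi F Y) (eta F Y ∘ f).

Definition sharp (Cat : Category) (K : Functor Cat) (F : FreeAlgebras K)
  (A : Obj Cat) (a : Hom Cat (K A) A) : Hom Cat (Mo F A) A :=
  fext F a (idm A).

Definition HxId_obj (Cat : Category) (P : Products Cat) (H : Functor Cat)
  (X : Obj Cat) : Obj Cat := prodo P (H X) X.

Definition HxId_map (Cat : Category) (P : Products Cat) (H : Functor Cat)
  (X Y : Obj Cat) (f : Hom Cat X Y) :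
  Hom Cat (HxId_obj P H X) (HxId_obj P H Y) :=
  pairing P (fmap H f ∘ pi1 P) (f ∘ pi2 P).

Definition is_GSOS_rule (Cat : Category) (P : Products Cat) (H K : Functor Cat)
  (F : FreeAlgebras K)
  (ell : forall X, Hom Cat (K (HxId_obj P H X)) (H (Mo F X))) : Prop :=
  forall X Y (f : Hom Cat X Y),
    ell Y ∘ fmap K (HxId_map P H f) = fmap H (Mmap F f) ∘ ell X.

Definition is_interpretation (Cat : Category) (P : Products Cat)
  (H K : Functor Cat) (T : TerminalCoalgebra H) (F : FreeAlgebras K)
  (ell : forall X, Hom Cat (K (HxId_obj P H X)) (H (Mo F X)))
  (b : Hom Cat (K (tc_carrier T)) (tc_carrier T)) : Prop :=
  tc_str T ∘ b =
    fmap H (sharp F b) ∘ ell (tc_carrier T)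
      ∘ fmap K (pairing P (tc_str T) (idm (tc_carrier T))).
Arguments is_interpretation {Cat P H K} T {F} ell b.

(* Main.v *)
Require Import Defs.
Set Implicit Arguments. Unset Strict Implicit.

Ltac ra := repeat rewrite <- comp_assoc.

Lemma fmap_comp' (Cat : Category) (G : Functor Cat) A B C D (g : Hom Cat B C) (f : Hom Cat A B) (h : Hom Cat D (G A)) :
  fmap G g ∘ (fmap G f ∘ h) = fmap G (g ∘ f) ∘ h.
Proof. rewrite fmap_comp, comp_assoc. reflexivity. Qed.

Lemma pairing_comp (Cat : Category) (P : Products Cat) X Y A B (f : Hom Cat X A) (g : Hom Cat X B) (h : Hom Cat Y X) :
  pairing P f g ∘ h = pairing P (f ∘ h) (g ∘ h).
Proof.
  apply pairing_unique; rewrite comp_assoc; [rewrite pi1_pairing|rewrite pi2_pairing]; reflexivity.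
Qed.

Lemma Mmap_eta (Cat : Category) (K : Functor Cat) (F : FreeAlgebras K) X Y (f : Hom Cat X Y) :
  Mmap F f ∘ eta F X = eta F Y ∘ f.
Proof. unfold Mmap. apply fext_eta. Qed.

Lemma Mmap_phi (Cat : Category) (K : Functor Cat) (F : FreeAlgebras K) X Y (f : Hom Cat X Y) :
  Mmap F f ∘ phi F X = phi F Y ∘ fmap K (Mmap F f).
Proof. unfold Mmap. apply fext_hom. Qed.

Lemma Mmap_comp (Cat : Category) (K : Functor Cat) (F : FreeAlgebras K) X Y Z (g : Hom Cat Y Z) (f : Hom Cat X Y) :
  Mmap F (g ∘ f) = Mmap F g ∘ Mmap F f.
Proof.
  symmetry. unfold Mmap at 3. apply fext_unique.
  - ra. rewrite Mmap_eta, comp_assoc, Mmap_eta. ra. reflexivity.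
  - ra. rewrite Mmap_phi, comp_assoc, Mmap_phi. ra. rewrite fmap_comp. ra. reflexivity.
Qed.

Lemma fext_sharp (Cat : Category) (K : Functor Cat) (F : FreeAlgebras K) X A (a : Hom Cat (K A) A) (f : Hom Cat X A) :
  fext F a f = sharp F a ∘ Mmap F f.
Proof.
  symmetry. apply fext_unique.
  - ra. rewrite Mmap_eta, comp_assoc. unfold sharp. rewrite fext_eta, comp_id_l. reflexivity.
  - ra. rewrite Mmap_phi, comp_assoc. unfold sharp at 1. rewrite fext_hom. ra. rewrite fmap_comp. ra. reflexivity.
Qed.

Lemma alg_hom_fext (Cat : Category) (K : Functor Cat) (F : FreeAlgebras K) X A (a : Hom Cat (K A) A) (h : Hom Cat (Mo F X) A) :
  h ∘ phi F X = a ∘ fmap K h -> h = fext F a (h ∘ eta F X).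
Proof. intro E. apply fext_unique; auto. Qed.

Lemma sharp_nat (Cat : Category) (K : Functor Cat) (F : FreeAlgebras K) A B (a : Hom Cat (K A) A) (a' : Hom Cat (K B) B) (f : Hom Cat A B) :
  f ∘ a = a' ∘ fmap K f -> f ∘ sharp F a = sharp F a' ∘ Mmap F f.
Proof.
  intro E. rewrite <- fext_sharp. apply fext_unique.
  - ra. unfold sharp. rewrite fext_eta. apply comp_id_r.
  - ra. unfold sharp at 1. rewrite fext_hom. rewrite comp_assoc, E. ra. rewrite fmap_comp. ra. reflexivity.
Qed.

Definition alpha (Cat : Category) (P : Products Cat) (H K : Functor Cat) (F : FreeAlgebras K)
  (ell : forall X, Hom Cat (K (HxId_obj P H X)) (H (Mo F X))) (A : Obj Cat) (a : Hom Cat (K A) A)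
  : Hom Cat (K (HxId_obj P H A)) (HxId_obj P H A) :=
  pairing P (fmap H (sharp F a) ∘ ell A) (a ∘ fmap K (pi2 P)).
Arguments alpha {Cat P H K F} ell {A} a.

Lemma alpha_nat (Cat : Category) (P : Products Cat) (H K : Functor Cat) (F : FreeAlgebras K)
  (ell : forall X, Hom Cat (K (HxId_obj P H X)) (H (Mo F X))) (ell_nat : is_GSOS_rule ell)
  A B (a : Hom Cat (K A) A) (a' : Hom Cat (K B) B) (f : Hom Cat A B) :
  f ∘ a = a' ∘ fmap K f ->
  HxId_map P H f ∘ alpha ell a = alpha ell a' ∘ fmap K (HxId_map P H f).
Proof.
  intro E. pose proof (ell_nat _ _ f) as N. unfold HxId_map, HxId_obj in N.
  unfold alpha, HxId_map, HxId_obj. rewrite !pairing_comp. f_equal.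
  - ra. rewrite pi1_pairing. rewrite N. rewrite fmap_comp'.
    rewrite (sharp_nat F E). rewrite fmap_comp. ra. reflexivity.
  - ra. rewrite pi2_pairing. rewrite comp_assoc, E. ra. rewrite <- !fmap_comp, pi2_pairing. reflexivity.
Qed.

Lemma pi2_ext (Cat : Category) (P : Products Cat) (H K : Functor Cat) (F : FreeAlgebras K)
  (ell : forall X, Hom Cat (K (HxId_obj P H X)) (H (Mo F X))) Z
  (g0 : Hom Cat Z (HxId_obj P H (Mo F Z))) :
  pi2 P ∘ g0 = eta F Z -> pi2 P ∘ fext F (alpha ell (phi F Z)) g0 = idm _.
Proof.
  intro E. transitivity (fext F (phi F Z) (eta F Z)).
  - apply fext_unique.
    + ra. rewrite fext_eta. exact E.
    + ra. rewrite fext_hom. rewrite comp_assoc. unfold alpha, HxId_obj in *. rewrite pi2_pairing. ra.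
      rewrite <- fmap_comp. reflexivity.
  - symmetry. apply fext_unique.
    + apply comp_id_l.
    + rewrite comp_id_l, fmap_id, comp_id_r. reflexivity.
Qed.

Lemma coind_L (Cat : Category) (P : Products Cat) (H K : Functor Cat) (T : TerminalCoalgebra H) (F : FreeAlgebras K)
  (ell : forall X, Hom Cat (K (HxId_obj P H X)) (H (Mo F X)))
  (ell_nat : is_GSOS_rule ell)
  (b : Hom Cat (K (tc_carrier T)) (tc_carrier T))
  (hb : is_interpretation T ell b)
  Z (g0 : Hom Cat Z (HxId_obj P H (Mo F Z))) (hg0 : pi2 P ∘ g0 = eta F Z)
  (w : Hom Cat Z (tc_carrier T))
  (hw : tc_str T ∘ w = fmap H (fext F b w) ∘ pi1 P ∘ g0) :
  tc_str T ∘ fext F b w = fmap H (fext F b w) ∘ (pi1 P ∘ fext F (alpha ell (phi F Z)) g0).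
Proof.
  set (u := fext F b w).
  assert (Hu : u ∘ phi F Z = b ∘ fmap K u) by apply fext_hom.
  assert (Hpc : pairing P (tc_str T) (idm _) ∘ b = alpha ell b ∘ fmap K (pairing P (tc_str T) (idm _))).
  { unfold alpha, HxId_obj in *. rewrite !pairing_comp. f_equal.
    - unfold is_interpretation in hb. rewrite hb. ra. reflexivity.
    - ra. rewrite <- fmap_comp, pi2_pairing, fmap_id, comp_id_r, comp_id_l. reflexivity. }
  assert (E1 : pairing P (tc_str T) (idm _) ∘ u = fext F (alpha ell b) (pairing P (tc_str T) (idm _) ∘ w)).
  { apply fext_unique.
    - ra. unfold u. rewrite fext_eta. reflexivity.
    - ra. rewrite Hu. rewrite comp_assoc, Hpc. ra. rewrite fmap_comp. reflexivity. }
  assert (E2 : HxId_map P H u ∘ fext F (alpha ell (phi F Z)) g0 = fext F (alpha ell b) (pairing P (tc_str T) (idm _) ∘ w)).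
  { apply fext_unique.
    - ra. rewrite fext_eta. unfold HxId_map, HxId_obj in *. rewrite !pairing_comp. f_equal.
      + ra. rewrite hw. ra. reflexivity.
      + ra. rewrite hg0. unfold u. rewrite fext_eta, comp_id_l. reflexivity.
    - ra. rewrite fext_hom. rewrite comp_assoc. rewrite (alpha_nat ell_nat Hu). ra. rewrite fmap_comp. reflexivity. }
  rewrite <- E2 in E1.
  assert (E3 := f_equal (fun h => pi1 P ∘ h) E1). simpl in E3.
  unfold HxId_map, HxId_obj in *. rewrite !comp_assoc, !pi1_pairing in E3. rewrite E3. ra. reflexivity.
Qed.

Theorem mainTheorem1 (Cat : Category) (P : Products Cat) (Q : Coproducts Cat)
  (H K : Functor Cat) (T : TerminalCoalgebra H) (F : FreeAlgebras K)
  (ell : forall X, Hom Cat (K (HxId_obj P H X)) (H (Mo F X)))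
  (ell_nat : is_GSOS_rule ell)
  (cinv : Hom Cat (H (tc_carrier T)) (tc_carrier T))
  (cinv_l : cinv ∘ tc_str T = idm (tc_carrier T))
  (cinv_r : tc_str T ∘ cinv = idm (H (tc_carrier T)))
  (b : Hom Cat (K (tc_carrier T)) (tc_carrier T))
  (hb : is_interpretation T ell b)
  (hb_unique : forall b', is_interpretation T ell b' -> b' = b)
  (X : Obj Cat) (e : Hom Cat X (Mo F (H (Mo F X)))) :
  exists sol : Hom Cat X (tc_carrier T),
    (sol = sharp F b ∘ Mmap F cinv ∘ Mmap F (fmap H (sharp F b))
             ∘ Mmap F (fmap H (Mmap F sol)) ∘ e)
    /\ forall sol' : Hom Cat X (tc_carrier T),
         sol' = sharp F b ∘ Mmap F cinv ∘ Mmap F (fmap H (sharp F b))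
                  ∘ Mmap F (fmap H (Mmap F sol')) ∘ e ->
         sol' = sol.
Proof.
  set (mu0 := sharp F (phi F (H (Mo F X)))).
  set (es := mu0 ∘ Mmap F e).
  set (g0 := pairing P (fmap H es) (eta F (H (Mo F X))) : Hom Cat (H (Mo F X)) (HxId_obj P H (Mo F (H (Mo F X))))).
  set (g := fext F (alpha ell (phi F (H (Mo F X)))) g0).
  set (u := tc_unfold T (pi1 P ∘ g)).
  assert (hu : tc_str T ∘ u = fmap H u ∘ (pi1 P ∘ g)) by apply tc_unfold_hom.
  assert (hmu0 : mu0 ∘ phi F (Mo F (H (Mo F X))) = phi F (H (Mo F X)) ∘ fmap K mu0) by apply fext_hom.
  assert (hg0 : pi2 P ∘ g0 = eta F (H (Mo F X))) by (unfold g0, HxId_obj; apply pi2_pairing).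
  assert (hpi2g : pi2 P ∘ g = idm _) by (apply pi2_ext; exact hg0).
  set (g0' := pairing P (fmap H (eta F (Mo F (H (Mo F X)))) ∘ (pi1 P ∘ g)) (eta F (Mo F (H (Mo F X)))) : Hom Cat (Mo F (H (Mo F X))) (HxId_obj P H (Mo F (Mo F (H (Mo F X)))))).
  set (g' := fext F (alpha ell (phi F (Mo F (H (Mo F X))))) g0').
  assert (L1 : tc_str T ∘ fext F b u = fmap H (fext F b u) ∘ (pi1 P ∘ g')).
  { apply (coind_L ell_nat hb).
    - unfold g0', HxId_obj. apply pi2_pairing.
    - unfold g0', HxId_obj. rewrite <- comp_assoc, pi1_pairing.
      rewrite comp_assoc, <- fmap_comp, fext_eta. exact hu. }
  assert (L2 : g ∘ mu0 = HxId_map P H mu0 ∘ g').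
  { transitivity (fext F (alpha ell (phi F (H (Mo F X)))) g).
    - apply fext_unique.
      + ra. unfold mu0, sharp. rewrite fext_eta. apply comp_id_r.
      + ra. rewrite hmu0. rewrite comp_assoc. unfold g at 1. rewrite fext_hom. ra.
        rewrite fmap_comp. reflexivity.
    - symmetry. apply fext_unique.
      + ra. unfold g'. rewrite fext_eta. unfold g0', HxId_map, HxId_obj in *.
        rewrite pairing_comp. symmetry. apply pairing_unique.
        * ra. rewrite pi1_pairing. ra. rewrite comp_assoc, <- fmap_comp.
          unfold mu0, sharp. rewrite fext_eta, fmap_id, comp_id_l. reflexivity.
        * ra. rewrite pi2_pairing. rewrite hpi2g.
          unfold mu0, sharp. rewrite fext_eta. reflexivity.
      + ra. unfold g'. rewrite fext_hom. rewrite comp_assoc, (alpha_nat ell_nat hmu0). ra.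
        rewrite fmap_comp. reflexivity. }
  assert (L3 : u ∘ mu0 = fext F b u).
  { transitivity (tc_unfold T (pi1 P ∘ g')).
    - apply tc_unfold_unique. rewrite comp_assoc, hu. ra. unfold HxId_map, HxId_obj in *. rewrite L2. rewrite (comp_assoc (pi1 P)), pi1_pairing. ra.
      rewrite comp_assoc, <- fmap_comp. reflexivity.
    - symmetry. apply tc_unfold_unique. exact L1. }
  assert (L4 : u ∘ phi F (H (Mo F X)) = b ∘ fmap K u).
  { assert (Ephi : phi F (H (Mo F X)) = mu0 ∘ phi F (Mo F (H (Mo F X))) ∘ fmap K (eta F (Mo F (H (Mo F X))))).
    { rewrite hmu0. ra. rewrite <- fmap_comp. unfold mu0, sharp. rewrite fext_eta, fmap_id, comp_id_r. reflexivity. }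
    rewrite Ephi. rewrite !comp_assoc, L3. rewrite fext_hom. ra. rewrite <- fmap_comp, fext_eta. reflexivity. }
  set (w := u ∘ eta F (H (Mo F X))).
  assert (L5 : u = fext F b w) by (apply alg_hom_fext; exact L4).
  assert (L6 : tc_str T ∘ w = fmap H (u ∘ es)).
  { unfold w. rewrite comp_assoc, hu. ra. unfold g. rewrite fext_eta. unfold g0, HxId_obj.
    rewrite pi1_pairing, fmap_comp. reflexivity. }
  assert (L7 : u ∘ es = sharp F b ∘ Mmap F (u ∘ e)).
  { unfold es. rewrite comp_assoc. unfold mu0. rewrite (sharp_nat F L4). ra. rewrite <- Mmap_comp. reflexivity. }
  exists (u ∘ e). split.
  - assert (Ew : w = cinv ∘ fmap H (sharp F b) ∘ fmap H (Mmap F (u ∘ e))).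
    { transitivity (cinv ∘ (tc_str T ∘ w)).
      + rewrite comp_assoc, cinv_l, comp_id_l. reflexivity.
      + rewrite L6, L7, fmap_comp. ra. reflexivity. }
    transitivity (fext F b w ∘ e). { rewrite <- L5. reflexivity. } rewrite fext_sharp, Ew, !Mmap_comp. ra. reflexivity.
  - intros sol' Hs'.
    set (w' := cinv ∘ fmap H (sharp F b) ∘ fmap H (Mmap F sol')).
    set (u' := fext F b w').
    assert (Hs'' : sol' = u' ∘ e).
    { etransitivity; [exact Hs'|]. unfold u', w'. rewrite fext_sharp, !Mmap_comp. ra. reflexivity. }
    assert (Hu' : u' ∘ phi F (H (Mo F X)) = b ∘ fmap K u') by apply fext_hom.
    assert (Ue : u' = u).
    { apply tc_unfold_unique. apply (coind_L ell_nat hb hg0).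
      unfold g0, HxId_obj. rewrite <- comp_assoc, pi1_pairing, <- fmap_comp.
      unfold w'. rewrite !comp_assoc, cinv_r, comp_id_l, <- fmap_comp. f_equal.
      pose proof (sharp_nat F Hu') as S. unfold u', w' in S, Hs''. unfold es. rewrite comp_assoc. unfold mu0. rewrite S.
      rewrite <- comp_assoc, <- Mmap_comp, <- Hs''. reflexivity. }
    rewrite Hs'', Ue. reflexivity.
Qed.
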